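(* Let $c\in\mathbb{R}\setminus\{0\}$ and let $\boldsymbol\eta_c:\mathbb{R}^2\to\mathbb{R}^2$ be $$\boldsymbol\eta_c(u,v)=\bigl(u^2+2cv,\ v^2+2cu\bigr).$$ Let $\mathbf y=(s_1,s_2)$ be a point in the four-image region of $\boldsymbol\eta_c$, i.e. the equation $\boldsymbol\eta_c(\mathbf x)=\mathbf y$ has exactly four distinct solutions $\mathbf x_i=(u_i,v_i)\in\mathbb{R}^2$, $i=1,\dots,4$, each with $\det(\mathrm{Jac}\,\boldsymbol\eta_c)(\mathbf x_i)\neq0$. Then, with $\mu_i=1/\det(\mathrm{Jac}\,\boldsymbol\eta_c)(\mathbf x_i)=\frac{1}{4(u_iv_i-c^2)}$, $$\mu_1+\mu_2+\mu_3+\mu_4=0.$$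
   Context: This map is the universal quantitative form of a one-parameter family of gravitational lensing maps near a hyperbolic umbilic caustic. Its critical curve is $uv=c^2$, and its caustic is $s_1=u^2+2c^3/u$, $s_2=2cu+c^4/u^2$; the four-image region is the region ''inside the beak'' of this caustic, where sources have exactly four preimages. *)

(* Defs.v *)
From Stdlib Require Import Reals.
Open Scope R_scope.

Definition eta (c : R) (x : R * R) : R * R :=
  let (u, v) := x in (u ^ 2 + 2 * c * v, v ^ 2 + 2 * c * u).

(* Determinant of the Jacobian matrix of eta_c at (u,v):
   Jac = [[d s1/du, d s1/dv], [d s2/du, d s2/dv]] = [[2u, 2c], [2c, 2v]]. *)
Definition jac_det (c : R) (x : R * R) : R :=
  let (u, v) := x in (2 * u) * (2 * v) - (2 * c) * (2 * c).

Definition mu (c : R) (x : R * R) : R := / jac_det c x.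

Definition four_images (c : R) (y x1 x2 x3 x4 : R * R) : Prop :=
  x1 <> x2 /\ x1 <> x3 /\ x1 <> x4 /\ x2 <> x3 /\ x2 <> x4 /\ x3 <> x4 /\
  eta c x1 = y /\ eta c x2 = y /\ eta c x3 = y /\ eta c x4 = y /\
  (forall x, eta c x = y -> x = x1 \/ x = x2 \/ x = x3 \/ x = x4) /\
  jac_det c x1 <> 0 /\ jac_det c x2 <> 0 /\ jac_det c x3 <> 0 /\ jac_det c x4 <> 0.

(* Main.v *)
Require Import Defs.
From Stdlib Require Import Reals Lra.
Open Scope R_scope.

Definition F u1 u2 s1 c := (u1+u2)*(u1^2+u2^2) - 2*s1*(u1+u2) + 8*c^3.
Definition G u1 u2 u3 s1 := u1^2+u2^2+u3^2+u1*u2+u1*u3+u2*u3 - 2*s1.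
Definition Q u s1 s2 c := u^4 - 2*s1*u^2 + 8*c^3*u + (s1^2 - 4*c^2*s2).

Lemma cancel (a b X : R) : a <> b -> (a - b) * X = 0 -> X = 0.
Proof. intros h e. destruct (Rmult_integral _ _ e) as [e'|e']; [lra|exact e']. Qed.

Lemma fromQ u1 u2 s1 s2 c : u1 <> u2 -> Q u1 s1 s2 c = 0 -> Q u2 s1 s2 c = 0 ->
  F u1 u2 s1 c = 0.
Proof. intros h q1 q2. apply (cancel u1 u2); auto.
  replace ((u1 - u2) * F u1 u2 s1 c) with (Q u1 s1 s2 c - Q u2 s1 s2 c)
    by (unfold Q, F; ring). lra. Qed.

Lemma fromF u1 u2 u3 s1 c : u2 <> u3 -> F u1 u2 s1 c = 0 -> F u1 u3 s1 c = 0 ->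
  G u1 u2 u3 s1 = 0.
Proof. intros h q1 q2. apply (cancel u2 u3); auto.
  replace ((u2 - u3) * G u1 u2 u3 s1) with (F u1 u2 s1 c - F u1 u3 s1 c)
    by (unfold G, F; ring). lra. Qed.

Lemma fromG u1 u2 u3 u4 s1 : u3 <> u4 -> G u1 u2 u3 s1 = 0 -> G u1 u2 u4 s1 = 0 ->
  u4 = -(u1+u2+u3).
Proof. intros h q1 q2.
  assert (u1+u2+u3+u4 = 0). { apply (cancel u3 u4); auto.
  replace ((u3 - u4) * (u1+u2+u3+u4)) with (G u1 u2 u3 s1 - G u1 u2 u4 s1)
    by (unfold G; ring). lra. } lra. Qed.

Lemma c1 u1 u2 u3 u4 s1 c : u4 = -(u1+u2+u3) -> 
 4*(u1^3 - s1*u1 + 2*c^3) - ((u1-u2)*(u1-u3)*(u1-u4)) = F u1 u2 s1 c + (2*u1 - (u1+u2))*G u1 u2 u3 s1.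
Proof. intros ->; unfold F, G; ring. Qed.
Lemma c2 u1 u2 u3 u4 s1 c : u4 = -(u1+u2+u3) -> 
 4*(u2^3 - s1*u2 + 2*c^3) - ((u2-u1)*(u2-u3)*(u2-u4)) = F u1 u2 s1 c + (2*u2 - (u1+u2))*G u1 u2 u3 s1.
Proof. intros ->; unfold F, G; ring. Qed.
Lemma c3 u1 u2 u3 u4 s1 c : u4 = -(u1+u2+u3) -> 
 4*(u3^3 - s1*u3 + 2*c^3) - ((u3-u1)*(u3-u2)*(u3-u4)) = F u1 u2 s1 c + (2*u3 - (u1+u2))*G u1 u2 u3 s1.
Proof. intros ->; unfold F, G; ring. Qed.
Lemma c4 u1 u2 u3 u4 s1 c : u4 = -(u1+u2+u3) -> 
 4*(u4^3 - s1*u4 + 2*c^3) - ((u4-u1)*(u4-u2)*(u4-u3)) = F u1 u2 s1 c + (2*u4 - (u1+u2))*G u1 u2 u3 s1.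
Proof. intros ->; unfold F, G; ring. Qed.

Lemma pt c u v s1 s2 : c <> 0 -> eta c (u, v) = (s1, s2) ->
  Q u s1 s2 c = 0 /\ c * jac_det c (u, v) = -2 * (u^3 - s1*u + 2*c^3)
  /\ v = (s1 - u^2) / (2*c).
Proof. intros hc e. simpl in e. injection e as A B. subst s1 s2.
  split; [unfold Q; ring|]. split; [unfold jac_det; ring| field; auto]. Qed.

Lemma dist c u1 v1 u2 v2 s1 : c <> 0 -> (u1, v1) <> (u2, v2) ->
  v1 = (s1 - u1^2) / (2*c) -> v2 = (s1 - u2^2) / (2*c) -> u1 <> u2.
Proof. intros hc h e1 e2 e. apply h. subst. reflexivity. Qed.

Lemma jacform c D P pr : c <> 0 -> c * D = -2 * P -> 4 * P - pr = 0 -> D = - pr / (2*c).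
Proof. intros hc h1 h2. apply (Rmult_eq_reg_l c); auto. field_simplify; auto. lra. Qed.

Theorem theorem1 (c : R) (hc : c <> 0) (y x1 x2 x3 x4 : R * R)
  (h4 : four_images c y x1 x2 x3 x4) :
  mu c x1 + mu c x2 + mu c x3 + mu c x4 = 0.
Proof.
  destruct y as [s1 s2]; destruct x1 as [u1 v1]; destruct x2 as [u2 v2];
  destruct x3 as [u3 v3]; destruct x4 as [u4 v4].
  destruct h4 as (n12 & n13 & n14 & n23 & n24 & n34 & e1 & e2 & e3 & e4 & _ & d1 & d2 & d3 & d4).
  destruct (pt _ _ _ _ _ hc e1) as (q1 & j1 & w1).
  destruct (pt _ _ _ _ _ hc e2) as (q2 & j2 & w2).
  destruct (pt _ _ _ _ _ hc e3) as (q3 & j3 & w3).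
  destruct (pt _ _ _ _ _ hc e4) as (q4 & j4 & w4).
  pose proof (dist _ _ _ _ _ _ hc n12 w1 w2) as m12.
  pose proof (dist _ _ _ _ _ _ hc n13 w1 w3) as m13.
  pose proof (dist _ _ _ _ _ _ hc n14 w1 w4) as m14.
  pose proof (dist _ _ _ _ _ _ hc n23 w2 w3) as m23.
  pose proof (dist _ _ _ _ _ _ hc n24 w2 w4) as m24.
  pose proof (dist _ _ _ _ _ _ hc n34 w3 w4) as m34.
  pose proof (fromQ _ _ _ _ _ m12 q1 q2) as F12.
  pose proof (fromQ _ _ _ _ _ m13 q1 q3) as F13.
  pose proof (fromQ _ _ _ _ _ m14 q1 q4) as F14.
  pose proof (fromF _ _ _ _ _ m23 F12 F13) as G123.
  pose proof (fromF _ _ _ _ _ m24 F12 F14) as G124.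
  pose proof (fromG _ _ _ _ _ m34 G123 G124) as E.
  pose proof (c1 u1 u2 u3 u4 s1 c E) as P1. rewrite F12, G123, Rmult_0_r, Rplus_0_l in P1.
  pose proof (c2 u1 u2 u3 u4 s1 c E) as P2. rewrite F12, G123, Rmult_0_r, Rplus_0_l in P2.
  pose proof (c3 u1 u2 u3 u4 s1 c E) as P3. rewrite F12, G123, Rmult_0_r, Rplus_0_l in P3.
  pose proof (c4 u1 u2 u3 u4 s1 c E) as P4. rewrite F12, G123, Rmult_0_r, Rplus_0_l in P4.
  assert (k1 := jacform _ _ _ ((u1-u2)*(u1-u3)*(u1-u4)) hc j1 ltac:(lra)).
  assert (k2 := jacform _ _ _ ((u2-u1)*(u2-u3)*(u2-u4)) hc j2 ltac:(lra)).
  assert (k3 := jacform _ _ _ ((u3-u1)*(u3-u2)*(u3-u4)) hc j3 ltac:(lra)).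
  assert (k4 := jacform _ _ _ ((u4-u1)*(u4-u2)*(u4-u3)) hc j4 ltac:(lra)).
  unfold mu. rewrite k1, k2, k3, k4.
  assert (u1 - u2 <> 0) by lra. assert (u1 - u3 <> 0) by lra.
  assert (u1 - u4 <> 0) by lra. assert (u2 - u3 <> 0) by lra.
  assert (u2 - u4 <> 0) by lra. assert (u3 - u4 <> 0) by lra.
  assert (u2 - u1 <> 0) by lra. assert (u3 - u1 <> 0) by lra.
  assert (u4 - u1 <> 0) by lra. assert (u3 - u2 <> 0) by lra.
  assert (u4 - u2 <> 0) by lra. assert (u4 - u3 <> 0) by lra.
  field. repeat split; auto.
Qed.
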